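(* Let $\mathcal{G}$ be a connected hypergraph with spectral radius $\rho$ and principal eigenvector $X=(x_v)$, let $k\ge2$, and let $e=\{u,v_1,v_2,\dots,v_{k-1}\}$ be a pendant edge of $\mathcal{G}$ with $\deg_{\mathcal{G}}(u)\geq 2$. Then $$x_{v_1}=x_{v_2}=\cdots=x_{v_{k-1}}=\frac{x_u}{(k-1)\rho-(k-2)}<x_u.$$
   Context: A hypergraph has a finite vertex set and distinct edges (subsets with at least two vertices); $\deg_{\mathcal{G}}(v)$ is the number of edges containing $v$; a pendant edge is an edge in which at most one vertex has degree greater than one. The adjacency matrix has $(\mathcal{A}_{\mathcal{G}})_{ij}=\sum_{e\ni i,j}\frac{1}{|e|-1}$ for $i\ne j$ and $0$ on the diagonal; $\rho$ is its spectral radius. For connected $\mathcal{G}$ the principal eigenvector is the unique positive eigenvector of $\mathcal{A}_{\mathcal{G}}$ for $\rho$ with unit Euclidean norm. *)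

(* Defs.v *)
From HB Require Import structures.
From mathcomp Require Import all_boot all_order all_algebra.
From mathcomp Require Import reals.
From mathcomp Require Import complex.
Set Implicit Arguments. Unset Strict Implicit. Unset Printing Implicit Defensive.
Import Order.TTheory GRing.Theory Num.Theory.
Local Open Scope ring_scope.

(* A hypergraph on the finite vertex type T is a set E of edges (distinct by
   construction, since E is a set), each edge having at least two vertices. *)
Definition is_hypergraph (T : finType) (E : {set {set T}}) : Prop :=
  forall e, e \in E -> (2 <= #|e|)%N.

Definition hdeg (T : finType) (E : {set {set T}}) (v : T) : nat :=
  #|[set e in E | v \in e]|.

Definition pendant_edge (T : finType) (E : {set {set T}}) (e : {set T}) : Prop :=
  e \in E /\ (#|[set w in e | (1 < hdeg E w)%N]| <= 1)%N.

Definition hadj (T : finType) (E : {set {set T}}) : rel T :=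
  fun x y => [exists e in E, (x \in e) && (y \in e)].

Definition hconnected (T : finType) (E : {set {set T}}) : Prop :=
  forall x y : T, connect (hadj E) x y.

Definition hadjw (R : realType) (T : finType) (E : {set {set T}}) (i j : T) : R :=
  if i == j then 0
  else \sum_(e in E | (i \in e) && (j \in e)) ((#|e|%:R - 1)^-1).

Definition hadjmx (R : realType) (T : finType) (E : {set {set T}})
  : 'M[R]_#|T| :=
  \matrix_(i, j) hadjw R E (enum_val i) (enum_val j).

Definition spectral_radius (R : realType) (n : nat) (A : 'M[R]_n) (rho : R) : Prop :=
  let AC := map_mx (fun x : R => (x%:C)%C) A in
  (exists z : R[i], eigenvalue AC z /\ `|z| = (rho%:C)%C) /\
  (forall z : R[i], eigenvalue AC z -> `|z| <= (rho%:C)%C).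

Definition principal_eigvec (R : realType) (n : nat) (A : 'M[R]_n) (rho : R)
  (X : 'cV[R]_n) : Prop :=
  (forall i, 0 < X i 0) /\ A *m X = rho *: X /\ \sum_i (X i 0) ^+ 2 = 1.

(* Main.v *)
Require Import Defs.
From HB Require Import structures.
From mathcomp Require Import all_boot all_order all_algebra.
From mathcomp Require Import reals.
From mathcomp Require Import complex.
From mathcomp Require Import ring lra.
Import Order.TTheory GRing.Theory Num.Theory.
Local Open Scope ring_scope.

Lemma L1 (R : realType) (T : finType) (E : {set {set T}}) (x : T -> R) (w : T) :
  \sum_j hadjw R E w j * x j =
  \sum_(f in E | w \in f) (#|f|%:R - 1)^-1 * \sum_(j in f :\ w) x j.
Proof.
rewrite /hadjw.
transitivity (\sum_j \sum_(f in E | (w \in f) && (j \in f))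
   (if w == j then 0 else (#|f|%:R - 1)^-1 * x j)).
  apply: eq_bigr => j _; case: eqP => _; first by rewrite mul0r big1.
  by rewrite mulr_suml.
rewrite (exchange_big_dep (fun f => (f \in E) && (w \in f))) /=; last first.
  by move=> j f _ /andP[-> /andP[->]].
apply: eq_bigr => f /andP[fE wf].
rewrite mulr_sumr big_mkcond [RHS]big_mkcond /=.
apply: eq_bigr => j _; rewrite fE wf in_setD1 /=.
by rewrite [w == j]eq_sym; case: (j == w); case: (j \in f).
Qed.

Lemma eigT (R : realType) (T : finType) (E : {set {set T}}) (rho : R)
  (X : 'cV[R]_#|T|) (w : T) :
  hadjmx R E *m X = rho *: X ->
  rho * X (enum_rank w) 0 = \sum_j hadjw R E w j * X (enum_rank j) 0.
Proof.
move=> /matrixP /(_ (enum_rank w) 0); rewrite !mxE => <-.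
rewrite (reindex (@enum_rank T)) /=; last by apply: onW_bij; exact: enum_rank_bij.
by apply: eq_bigr => j _; rewrite mxE !enum_rankK.
Qed.

Lemma hadjw_sym (R : realType) (T : finType) (E : {set {set T}}) i j :
  hadjw R E i j = hadjw R E j i.
Proof. rewrite /hadjw eq_sym; case: (j == i) => //; apply: eq_bigl => f; by case: (i \in f); case: (j \in f); rewrite ?andbT ?andbF. Qed.

Lemma rowsum (R : realType) (T : finType) (E : {set {set T}}) (j : T) :
  is_hypergraph E ->
  \sum_w hadjw R E j w = (hdeg E j)%:R.
Proof.
move=> HE.
have H := L1 R T E (fun _ => 1 : R) j.
rewrite (eq_bigr (fun w => hadjw R E j w * 1)); last by move=> ? _; rewrite mulr1.
rewrite H.
rewrite /hdeg -sum1_card big_mkcond /= [in RHS]big_mkcond /= natr_sum.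
apply: eq_bigr => f _; rewrite inE.
case: ifP => // /andP[fE jf].
rewrite sumr_const.
have := cardsD1 j f; rewrite jf /= => Hc.
have h2 := HE f fE.
have -> : #|f :\ j| = (#|f| - 1)%N by rewrite Hc add1n subSS subn0.
rewrite natrB; last by rewrite Hc add1n.
by rewrite mulVf // subr_eq0 pnatr_eq1; apply/eqP => h; rewrite h in h2.
Qed.

Lemma sumD1 (R : realType) (T : finType) (x : T -> R) (A : {set T}) a :
  a \in A -> \sum_(j in A) x j = x a + \sum_(j in A :\ a) x j.
Proof.
move=> aA; rewrite (bigD1 a) //=; congr (_ + _); apply: eq_bigl => j.
by rewrite in_setD1 andbC.
Qed.

Theorem lemma3p7 (R : realType) (T : finType) (E : {set {set T}})
  (rho : R) (X : 'cV[R]_#|T|) (k : nat) (e : {set T}) (u : T) :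
  is_hypergraph E -> hconnected E ->
  spectral_radius (hadjmx R E) rho ->
  principal_eigvec (hadjmx R E) rho X ->
  (2 <= k)%N -> #|e| = k -> u \in e ->
  pendant_edge E e -> (2 <= hdeg E u)%N ->
  forall v : T, v \in e -> v != u ->
    X (enum_rank v) 0 = X (enum_rank u) 0 / ((k%:R - 1) * rho - (k%:R - 2)) /\
    X (enum_rank v) 0 < X (enum_rank u) 0.
Proof.
move=> HE _ _ [Xpos [Heig _]] k2 ek ue [eE pend] du.
pose x : T -> R := fun w => X (enum_rank w) 0.
have xpos : forall w, 0 < x w by move=> w; exact: Xpos.
have eig : forall w, rho * x w =
    \sum_(f in E | w \in f) (#|f|%:R - 1)^-1 * \sum_(j in f :\ w) x j.
  by move=> w; rewrite /x (eigT R T E rho X w Heig) (L1 R T E x w).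
have deg1 : forall v, v \in e -> v != u -> [set f in E | v \in f] = [set e].
  move=> v ve vu.
  have hv : (hdeg E v <= 1)%N.
    rewrite leqNgt; apply/negP => hv.
    have : (#|[set u; v]| <= #|[set w in e | (1 < hdeg E w)%N]|)%N.
      apply: subset_leq_card; apply/subsetP => w; rewrite !inE.
      by case/orP => /eqP ->; rewrite ?ue ?ve /= ?hv // (leq_trans _ du).
    by rewrite cards2 eq_sym vu => /leq_trans /(_ pend).
  have ein : e \in [set f in E | v \in f] by rewrite inE eE ve.
  have : #|[set f in E | v \in f]| == 1%N.
    rewrite eqn_leq hv /=; rewrite /hdeg in hv *.
    by rewrite card_gt0; apply/set0Pn; exists e.
  by case/cards1P => y Hy; move: ein; rewrite Hy inE => /eqP <-.
have km1 : (k%:R - 1 : R) != 0.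
  by rewrite subr_eq0 pnatr_eq1; apply/eqP => h; rewrite h in k2.
have km1p : (0 : R) < k%:R - 1.
  by rewrite subr_gt0 ltr1n.
set S := \sum_(j in e) x j.
have eqv : forall v, v \in e -> v != u -> x v * ((k%:R - 1) * rho + 1) = S.
  move=> v ve vu.
  have := eig v.
  rewrite (eq_bigl (fun f => f \in [set f in E | v \in f])); last first.
    by move=> f; rewrite inE.
  rewrite deg1 // big_set1 ek /S (sumD1 R T x e v ve) => h.
  have -> : \sum_(j in e :\ v) x j = (k%:R - 1) * (rho * x v).
    by rewrite h mulrA mulfV // mul1r.
  ring.
have sv : forall v, v \in e -> v != u ->
    \sum_(j in e :\ v) x j = (k%:R - 1) * (rho * x v).
  move=> v ve vu; have := eig v.
  rewrite (eq_bigl (fun f => f \in [set f in E | v \in f])); last first.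
    by move=> f; rewrite inE.
  rewrite deg1 // big_set1 ek => ->.
  by rewrite mulrA mulfV // mul1r.
have sumge : forall A : {set T}, u \in A -> x u <= \sum_(j in A) x j.
  move=> A uA; rewrite (sumD1 R T x A u uA) lerDl.
  by apply: sumr_ge0 => j _; exact: ltW.
have Spos : 0 < S by apply: lt_le_trans (xpos u) (sumge e ue).
move=> v ve vu.
have rhopos : 0 < rho.
  have : 0 < (k%:R - 1) * (rho * x v).
    rewrite -sv //; apply: lt_le_trans (xpos u) (sumge _ _).
    by rewrite in_setD1 eq_sym vu ue.
  by rewrite pmulr_rgt0 // pmulr_lgt0.
have allv : forall j, j \in e :\ u -> x j = x v.
  move=> j; rewrite in_setD1 => /andP[ju je].
  have c0 : ((k%:R - 1) * rho + 1 : R) != 0.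
    apply/eqP => c0; move: (eqv v ve vu); rewrite c0 mulr0 => S0.
    by move: Spos; rewrite -S0 ltxx.
  by apply: (mulIf c0); rewrite eqv // eqv.
have HS : S = x u + (k%:R - 1) * x v.
  rewrite /S (sumD1 R T x e u ue); congr (_ + _).
  rewrite (eq_bigr (fun _ => x v)) // sumr_const.
  have := cardsD1 u e; rewrite ue ek add1n => ->.
  by rewrite -natr1 addrK mulr_natl.
have hD : x v * ((k%:R - 1) * rho - (k%:R - 2)) = x u.
  have h := eqv v ve vu; rewrite HS in h.
  have -> : x v * ((k%:R - 1) * rho - (k%:R - 2)) =
     x v * ((k%:R - 1) * rho + 1) - (k%:R - 1) * x v by ring.
  rewrite h; ring.
have degpos : forall j, (0 < hdeg E j)%N.
  move=> j; rewrite lt0n; apply/negP => /eqP /cards0_eq H0.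
  have := eig j; rewrite big_pred0; last first.
    move=> f /=; apply/negP => Hf.
    have : f \in [set f in E | j \in f] by rewrite inE.
    by rewrite H0 inE.
  move/eqP; rewrite mulf_eq0 => /orP[/eqP r0|/eqP x0].
    by move: rhopos; rewrite r0 ltxx.
  by move: (xpos j); rewrite x0 ltxx.
have key : rho * \sum_w x w = \sum_w (hdeg E w)%:R * x w.
  rewrite mulr_sumr (eq_bigr (fun w => \sum_j hadjw R E w j * x j)); last first.
    by move=> w _; exact: eigT.
  rewrite exchange_big /=; apply: eq_bigr => j _.
  rewrite -(rowsum R T E j HE) mulr_suml; apply: eq_bigr => w _.
  by rewrite hadjw_sym.
have ineq : \sum_w x w + x u <= \sum_w (hdeg E w)%:R * x w.
  rewrite (bigD1 u) //= [X in _ <= X](bigD1 u) //=.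
  have h1 : \sum_(w | w != u) x w <= \sum_(w | w != u) (hdeg E w)%:R * x w.
    apply: ler_sum => w _; apply: ler_peMl; first exact: ltW.
    by rewrite ler1n degpos.
  have h2 : 2%:R * x u <= (hdeg E u)%:R * x u.
    by apply: ler_wpM2r; [exact: ltW | rewrite ler_nat].
  have := xpos u; lra.
have Tpos : 0 < \sum_w x w.
  rewrite (bigD1 u) //=; apply: lt_le_trans (xpos u) _; rewrite lerDl.
  by apply: sumr_ge0 => j _; exact: ltW.
have rho1 : 1 < rho.
  have := xpos u; rewrite -key in ineq; nra.
have D1 : 1 < (k%:R - 1) * rho - (k%:R - 2).
  nra.
change (x v = x u / ((k%:R - 1) * rho - (k%:R - 2)) /\ x v < x u).
split.
  by rewrite -hD mulfK // gt_eqF // (lt_trans ltr01 D1).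
by rewrite -hD; have := xpos v; nra.
Qed.
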